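(* Let $X$ be a compact Hausdorff space and $\varphi:X\to X$ a continuous surjection. Then the canonical homeomorphism extension $(\tilde X,\tilde\varphi)$ of $(X,\varphi)$ is minimal.
   Context: A system $(Y,\psi)$ ($Y$ compact Hausdorff, $\psi$ a continuous surjection) is an extension of $(X,\varphi)$ if there is a continuous surjection $p:Y\to X$ (the extension map) with $p\circ\psi=\varphi\circ p$; if $p$ is a homeomorphism it is a conjugacy, and the systems are conjugate. A homeomorphism extension is an extension in which $\psi$ is a homeomorphism. The canonical homeomorphism extension: $\tilde X=\{(x_1,x_2,\dots)\in\prod_{n\ge1}X : x_n=\varphi(x_{n+1})\ \forall n\}$ with product topology, $\tilde\varphi(x_1,x_2,\dots)=(\varphi(x_1),x_1,x_2,\dots)$, extension map $p(x_1,x_2,\dots)=x_1$. A homeomorphism extension $(Y,\psi)$ of $(X,\varphi)$ is minimal if whenever $(Z,\sigma)$ is a homeomorphism extension of $(X,\varphi)$ and $(Y,\psi)$ is an extension of $(Z,\sigma)$ such that the composition of the extension map of $Z$ over $X$ with the extension map of $Y$ over $Z$ equals the extension map of $Y$ over $X$, then $(Y,\psi)$ and $(Z,\sigma)$ are conjugate. *)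

(* Defs.v *)
From HB Require Import structures.
From mathcomp Require Import all_boot all_order all_algebra.
From mathcomp Require Import all_classical all_reals all_analysis.
Set Implicit Arguments. Unset Strict Implicit. Unset Printing Implicit Defensive.
Local Open Scope classical_set_scope.

Definition onto_map {A B : Type} (f : A -> B) := forall b, exists a, f a = b.

Definition homeomorphism {Y Z : topologicalType} (f : Y -> Z) :=
  continuous f /\ exists g : Z -> Y, continuous g /\ cancel f g /\ cancel g f.

Definition system (Y : topologicalType) (psi : Y -> Y) :=
  compact [set: Y] /\ hausdorff_space Y /\ continuous psi /\ onto_map psi.

Definition is_extension {Y X : topologicalType} (psi : Y -> Y) (phi : X -> X)
  (p : Y -> X) := continuous p /\ onto_map p /\ (forall y, p (psi y) = phi (p y)).

Definition conjugate {Y Z : topologicalType} (psi : Y -> Y) (sigma : Z -> Z) :=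
  exists h : Y -> Z, is_extension psi sigma h /\ homeomorphism h.

Definition homeo_extension {X Y : topologicalType} (phi : X -> X)
  (psi : Y -> Y) (p : Y -> X) :=
  system psi /\ homeomorphism psi /\ is_extension psi phi p.

Definition minimal_homeo_extension {X Y : topologicalType} (phi : X -> X)
  (psi : Y -> Y) (p : Y -> X) :=
  homeo_extension phi psi p /\
  forall (Z : topologicalType) (sigma : Z -> Z) (q : Z -> X) (r : Y -> Z),
    homeo_extension phi sigma q -> is_extension psi sigma r ->
    (forall y, q (r y) = p y) -> conjugate psi sigma.

(* Canonical homeomorphism extension. Sequences are indexed from 0:
   x : nat -> X stands for (x_1, x_2, ...) with x_{n+1} = x n. *)
Definition tildeX_set {X : topologicalType} (phi : X -> X) : set {ptws nat -> X} :=
  [set x | forall n, x n = phi (x n.+1)].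

Definition tildeX {X : topologicalType} (phi : X -> X) : topologicalType :=
  (set_type (tildeX_set phi) : topologicalType).

Definition shift_fun {X : topologicalType} (phi : X -> X) (x : {ptws nat -> X}) : {ptws nat -> X} :=
  fun n => if n is m.+1 then x m else phi (x 0%N).

Lemma shift_fun_in {X : topologicalType} (phi : X -> X) (x : tildeX phi) :
  tildeX_set phi (shift_fun phi (set_val x)).
Proof.
case: x => x /= /set_mem Hx [|n] //=.
Qed.

Definition tphi {X : topologicalType} (phi : X -> X) : tildeX phi -> tildeX phi :=
  fun x => exist _ (shift_fun phi (set_val x)) (mem_set (shift_fun_in x)).

Definition tproj {X : topologicalType} (phi : X -> X) : tildeX phi -> X :=
  fun x => set_val x 0%N.

Arguments tphi {X} phi _.
Arguments tproj {X} phi _.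

(* Main.v *)
Require Import Defs.
From mathcomp Require Import all_boot all_order all_algebra.
From mathcomp Require Import all_classical all_reals all_analysis.
Local Open Scope classical_set_scope.
Lemma ptws_cont (T X : topologicalType) (f : T -> {ptws nat -> X}) :
  (forall n, continuous (fun t => f t n)) -> continuous f.
Proof.
move=> cf x; apply/cvg_sup.


move=> i; move: x; apply/(@continuousP _ (initial_topology (@^~ i))) => A [B oB <-].
exact: (@open_comp _ _ (fun t => f t i)).
Qed.

Lemma into_tilde (T X : topologicalType) (phi : X -> X) (g : T -> tildeX phi) :
  continuous (fun t => set_val (g t)) -> continuous g.
Proof. move=> h. exact: (@continuous_comp_initial _ _ _ set_val g h). Qed.

Lemma val_cont (X : topologicalType) (phi : X -> X) :
  continuous (fun x : tildeX phi => (set_val x : {ptws nat -> X})).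
Proof. exact: initial_continuous. Qed.

Lemma coord_cont (X : topologicalType) (phi : X -> X) n :
  continuous (fun x : tildeX phi => set_val x n).
Proof.
move=> x; apply: (@continuous_comp _ _ _ (fun x : tildeX phi => (set_val x : {ptws nat -> X})) (fun f => f n)).
  exact: val_cont.
exact: (@proj_continuous nat (fun _ => X) n).
Qed.

Lemma tilde_hausdorff (X : topologicalType) (phi : X -> X) :
  hausdorff_space X -> hausdorff_space (tildeX phi).
Proof.
move=> hX p q cl.
have hP : hausdorff_space {ptws nat -> X} by apply: hausdorff_product.
apply: val_inj; apply: hP => A B nA nB.
have c : continuous (fun x : tildeX phi => (set_val x : {ptws nat -> X})) by exact: initial_continuous.
have [z [Az Bz]] := cl _ _ (c p _ nA) (c q _ nB).
by exists (set_val z).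
Qed.
Lemma closed_eqfun (T Y : topologicalType) (f g : T -> Y) :
  hausdorff_space Y -> continuous f -> continuous g -> closed [set x | f x = g x].
Proof.
move=> hY cf cg x clx; apply: hY => A B nA nB.
have N : nbhs x (f @^-1` A `&` g @^-1` B).
  by apply: filterI; [exact: cf|exact: cg].
have [y [/= fgy [Ay By]]] := clx _ N.
by exists (f y); split => //; rewrite fgy.
Qed.

Lemma tildeset_compact (X : topologicalType) (phi : X -> X) :
  compact [set: X] -> hausdorff_space X -> continuous phi ->
  compact (tildeX_set phi).
Proof.
move=> cX hX cphi.
have pc n : continuous (fun f : {ptws nat -> X} => f n)
  by exact: (@proj_continuous nat (fun _ => X) n).
have -> : tildeX_set phi = \bigcap_(n in [set: nat]) [set f : {ptws nat -> X} | f n = phi (f n.+1)].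
  by apply/seteqP; split => [f Hf n _|f Hf n] //=; exact: Hf.
apply: (@subclosed_compact _ _ [set f : {ptws nat -> X} | forall i, [set: X] (f i)]).
- apply: closed_bigI => n _; apply: closed_eqfun => //.
  move=> f; apply: continuous_comp; [exact: pc|exact: cphi].
- exact: (@tychonoff nat (fun _ => X) (fun _ => [set: X])).
- by [].
Qed.

Lemma tilde_compact (X : topologicalType) (phi : X -> X) :
  compact [set: X] -> hausdorff_space X -> continuous phi ->
  compact [set: tildeX phi].
Proof.
move=> cX hX cphi.
have [[a0 _]|N] := pselect (exists a : tildeX phi, True); last first.
  have -> : [set: tildeX phi] = set0 by apply/seteqP; split => // a _; apply: N; exists a.
  exact: compact0.
pose F (f : {ptws nat -> X}) : tildeX phi :=
  match pselect (tildeX_set phi f) with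
  | left h => exist _ f (mem_set h)
  | right _ => a0 end.
have -> : [set: tildeX phi] = F @` tildeX_set phi.
  apply/seteqP; split => // y _; exists (set_val y); first exact: set_valP.
  rewrite /F; case: pselect => h; last by exfalso; apply: h; exact: set_valP.
  by apply: val_inj.
apply: continuous_compact; last exact: tildeset_compact.
apply/subspace_sigL_continuousP.
have -> : sigL (tildeX_set phi) F = id.
  apply: funext => y; rewrite /sigL /F /=; case: pselect => h; last by exfalso; apply: h; exact: set_valP.
  by apply: val_inj.
by move=> ?; exact: cvg_id.
Qed.

Lemma tinv_in (X : topologicalType) (phi : X -> X) (x : tildeX phi) :
  tildeX_set phi (fun n => set_val x n.+1).
Proof. by move=> n /=; have := set_valP x; apply. Qed.

Definition tinv (X : topologicalType) (phi : X -> X) (x : tildeX phi) : tildeX phi :=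
  exist _ (fun n => set_val x n.+1) (mem_set (@tinv_in X phi x)).
Arguments tinv {X phi} x.

Lemma iter_tinv (X : topologicalType) (phi : X -> X) n (y : tildeX phi) m :
  set_val (iter n (@tinv X phi) y) m = set_val y (m + n).
Proof.
elim: n m => [|n IH] m /=; first by rewrite addn0.
have -> : set_val (iter n.+1 (@tinv X phi) y) m = set_val (iter n tinv y) m.+1 by [].
by rewrite IH addSnnS.
Qed.

Lemma iter_cont (Z : topologicalType) (s : Z -> Z) n :
  continuous s -> continuous (iter n s).
Proof.
move=> cs; elim: n => [|n IH] /=; first by move=> ?; exact: cvg_id.
move=> z; apply: (@continuous_comp _ _ _ (iter n s) s); [exact: IH|exact: cs].
Qed.

Theorem lemma1 (X : topologicalType) (phi : X -> X) :
  compact [set: X] -> hausdorff_space X -> continuous phi -> onto_map phi ->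
  minimal_homeo_extension phi (tphi phi) (tproj phi).
Proof.
move=> cX hX cphi ophi.
have ctphi : continuous (tphi phi).
  apply: into_tilde; apply: ptws_cont => -[|n] /=.
    move=> x; apply: (@continuous_comp _ _ _ (fun x : tildeX phi => set_val x 0%N) phi).
      exact: coord_cont.
    exact: cphi.
  exact: coord_cont.
have ctinv : continuous (@tinv X phi).
  apply: into_tilde; apply: ptws_cont => n /=; exact: coord_cont.
have K1 : cancel (tphi phi) (@tinv X phi).
  by move=> x; apply: val_inj; apply: funext => n.
have K2 : cancel (@tinv X phi) (tphi phi).
  move=> x; apply: val_inj; apply: funext => -[|n] //=.
  by rewrite /shift_fun /=; have := set_valP x; move=> /(_ 0%N) ->.
have ctproj : continuous (tproj phi) by exact: coord_cont.
split.
  split; [split|split].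
  - exact: tilde_compact.
  - split; first exact: tilde_hausdorff.
    split => //; move=> b; exists (tinv b); exact: K2.
  - split => //; exists (@tinv X phi); split => //.
  - split => //; split => // x.
    have [g hg] := @choice X X (fun y z => phi z = y) ophi.
    have Hin : tildeX_set phi (fun n => iter n g x).
      by move=> n /=; rewrite hg.
    by exists (exist _ (fun n => iter n g x) (mem_set Hin)).
move=> Z sigma q r [[_ [hZ _]] [[cs [sinv [csinv [Ks1 Ks2]]]] [cq [oq eq]]]] [cr [or er]] eqr.
exists r; split; first by split.
split => //.
have Gin : forall z, tildeX_set phi (fun n => q (iter n sinv z)).
  move=> z n /=; rewrite -eq Ks2 //.
pose G z : tildeX phi := exist _ (fun n => q (iter n sinv z)) (mem_set (Gin z)).
exists G; split.
  apply: into_tilde; apply: ptws_cont => n /= z.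
  apply: (@continuous_comp _ _ _ (iter n sinv) q); [exact: iter_cont|exact: cq].
have rtinv : forall y, r (tinv y) = sinv (r y).
  by move=> y; rewrite -{2}(K2 y) er Ks1.
have Kr : cancel r G.
  move=> y; apply: val_inj; apply: funext => n /=.
  have -> : iter n sinv (r y) = r (iter n (@tinv X phi) y).
    by elim: n => [|n IH] //=; rewrite IH rtinv.
  by rewrite eqr /tproj iter_tinv.
split => // z; have [y <-] := or z; by rewrite Kr.
Qed.
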